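(* Let $(X,d)$ be a complete metric space and let $G:X\times X\to X$ be a mapping such that (a) $G(x,x)=x$ for all $x\in X$, and (b) for $x,y\in X$, $G(x,y)=x$ implies $y=x$. Let $T:X\to P_{cl}(X)$ be a multivalued operator with $SFix(T)\neq\emptyset$ and let $T_G(x)=\{G(x,u):u\in T(x)\}$ be the admissible perturbation of $T$ corresponding to $G$. Suppose there exist $\alpha,\beta,\gamma\ge0$ with $\alpha+\beta+\gamma<1$ such that $$H(T_G(x),T_G(y))\le\alpha d(x,y)+\beta D(x,T_G(y))+\gamma D(y,T_G(x))\quad\text{for all }x,y\in X,$$ so that $SFix(T)=\{x^*\}$ for some $x^*$, and suppose there exists $l\in(0,1)$ such that $H(T(x),\{x^*\})\le l\,H(T_G(x),\{x^*\})$ for all $x\in X$. Then $T$ is a quasi-contraction: there exists $q\in(0,1)$ such that $H(T(x),\{x^*\})\le q\,d(x,x^* )$ for all $x^*\in SFix(T)$ and all $x\in X$.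
   Context: $P_{cl}(X)$ is the family of nonempty closed subsets of $X$; $SFix(T)=\{x:T(x)=\{x\}\}$. For nonempty $A,B\subseteq X$: $D(a,B)=\inf_{b\in B}d(a,b)$, $e(A,B)=\sup_{a\in A}D(a,B)$, $H(A,B)=\max\{e(A,B),e(B,A)\}$. *)

(* Defs.v *)
From Stdlib Require Import Reals.
From Coquelicot Require Import Rbar Lub.
Open Scope R_scope.

Section Metric.
Variable X : Type.
Variable d : X -> X -> R.

Definition is_metric : Prop :=
  (forall x y, 0 <= d x y) /\
  (forall x y, d x y = 0 <-> x = y) /\
  (forall x y, d x y = d y x) /\
  (forall x y z, d x z <= d x y + d y z).

Definition cauchy_seq (u : nat -> X) : Prop :=
  forall eps, 0 < eps -> exists N, forall m n, (N <= m)%nat -> (N <= n)%nat ->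
    d (u m) (u n) < eps.

Definition seq_converges_to (u : nat -> X) (l : X) : Prop :=
  forall eps, 0 < eps -> exists N, forall n, (N <= n)%nat -> d (u n) l < eps.

Definition complete : Prop :=
  forall u, cauchy_seq u -> exists l, seq_converges_to u l.

Definition nonempty (A : X -> Prop) : Prop := exists a, A a.

Definition closed (A : X -> Prop) : Prop :=
  forall x, (forall eps, 0 < eps -> exists a, A a /\ d x a < eps) -> A x.

Definition P_cl (A : X -> Prop) : Prop := nonempty A /\ closed A.

Definition singleton (x : X) : X -> Prop := fun y => y = x.

(* D(a,B) = inf_{b in B} d(a,b); real-valued (finite for nonempty B) *)
Definition Dist (a : X) (B : X -> Prop) : R :=
  real (Glb_Rbar (fun r => exists b, B b /\ r = d a b)).

Definition exc (A B : X -> Prop) : Rbar :=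
  Lub_Rbar (fun r => exists a, A a /\ r = Dist a B).

Definition Rbar_maximum (a b : Rbar) : Rbar := if Rbar_le_dec a b then b else a.
Definition Haus (A B : X -> Prop) : Rbar := Rbar_maximum (exc A B) (exc B A).

Definition SFix (T : X -> X -> Prop) (x : X) : Prop :=
  forall y, T x y <-> y = x.

Definition TG (G : X -> X -> X) (T : X -> X -> Prop) (x : X) : X -> Prop :=
  fun z => exists u, T x u /\ z = G x u.
End Metric.
Arguments is_metric {X}. Arguments cauchy_seq {X}. Arguments seq_converges_to {X}.
Arguments complete {X}. Arguments nonempty {X}. Arguments closed {X}.
Arguments P_cl {X}. Arguments singleton {X}. Arguments Dist {X}.
Arguments exc {X}. Arguments Haus {X}. Arguments SFix {X}. Arguments TG {X}.

(* Main.v *)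
Require Import Defs.
From Stdlib Require Import Reals.
From Coquelicot Require Import Rbar Lub.
Open Scope R_scope.

From Stdlib Require Import Lra FunctionalExtensionality PropExtensionality.

Lemma lub_single (E : R -> Prop) (c : R) :
  (forall r, E r <-> r = c) -> Lub_Rbar E = Finite c.
Proof.
  intros H. apply is_lub_Rbar_unique. split.
  - intros r Hr. apply H in Hr. subst. simpl. lra.
  - intros b Hb. apply Hb. apply H. reflexivity.
Qed.

Lemma glb_single (E : R -> Prop) (c : R) :
  (forall r, E r <-> r = c) -> Glb_Rbar E = Finite c.
Proof.
  intros H. apply is_glb_Rbar_unique. split.
  - intros r Hr. apply H in Hr. subst. simpl. lra.
  - intros b Hb. apply Hb. apply H. reflexivity.
Qed.

Lemma Dist_single {X} (d : X -> X -> R) a b : Dist d a (singleton b) = d a b.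
Proof.
  unfold Dist. rewrite (glb_single _ (d a b)). reflexivity.
  intros r; split.
  - intros [b' [Hb Hr]]. unfold singleton in Hb. subst. reflexivity.
  - intros ->. exists b. split; reflexivity.
Qed.

Lemma exc_single {X} (d : X -> X -> R) a B : exc d (singleton a) B = Finite (Dist d a B).
Proof.
  unfold exc. apply lub_single. intros r; split.
  - intros [a' [Ha Hr]]. unfold singleton in Ha. subst. reflexivity.
  - intros ->. exists a. split; reflexivity.
Qed.

Lemma max_ge_r a b : Rbar_le b (Rbar_maximum a b).
Proof.
  unfold Rbar_maximum. destruct (Rbar_le_dec a b). apply Rbar_le_refl.
  destruct a, b; simpl in *; try tauto; lra.
Qed.

Lemma max_ge_l a b : Rbar_le a (Rbar_maximum a b).
Proof.
  unfold Rbar_maximum. destruct (Rbar_le_dec a b). auto. apply Rbar_le_refl.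
Qed.

Lemma Haus_ge {X} (d : X -> X -> R) A b :
  Rbar_le (Finite (Dist d b A)) (Haus d A (singleton b)).
Proof.
  unfold Haus. rewrite <- exc_single. apply max_ge_r.
Qed.

Lemma Haus_ss {X} (d : X -> X -> R) (hm : is_metric d) a b :
  Haus d (singleton a) (singleton b) = Finite (d a b).
Proof.
  unfold Haus. rewrite !exc_single, !Dist_single.
  destruct hm as [_ [_ [hs _]]]. rewrite (hs b a).
  unfold Rbar_maximum. destruct Rbar_le_dec; reflexivity.
Qed.

Lemma TG_sfix {X} (G : X -> X -> X) (T : X -> X -> Prop) x :
  (forall x, G x x = x) -> SFix T x -> TG G T x = singleton x.
Proof.
  intros hGa hx. apply functional_extensionality. intros z.
  apply propositional_extensionality. unfold TG, singleton. split.
  - intros [u [Hu ->]]. apply hx in Hu. subst. apply hGa.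
  - intros ->. exists x. split. apply hx. reflexivity. symmetry; apply hGa.
Qed.

Theorem mainTheorem8 (X : Type) (d : X -> X -> R)
  (hmetric : is_metric d) (hcomplete : complete d)
  (G : X -> X -> X)
  (hGa : forall x, G x x = x)
  (hGb : forall x y, G x y = x -> y = x)
  (T : X -> X -> Prop)
  (hT : forall x, P_cl d (T x))
  (alpha beta gamma : R)
  (ha : 0 <= alpha) (hb : 0 <= beta) (hg : 0 <= gamma)
  (habg : alpha + beta + gamma < 1)
  (hcontr : forall x y,
     Rbar_le (Haus d (TG G T x) (TG G T y))
             (Finite (alpha * d x y + beta * Dist d x (TG G T y)
                      + gamma * Dist d y (TG G T x))))
  (xs : X) (hxs : SFix T xs)
  (l : R) (hl0 : 0 < l) (hl1 : l < 1)
  (hl : forall x,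
     Rbar_le (Haus d (T x) (singleton xs))
             (Rbar_mult (Finite l) (Haus d (TG G T x) (singleton xs)))) :
  exists q : R, 0 < q /\ q < 1 /\
    forall x0, SFix T x0 -> forall x,
      Rbar_le (Haus d (T x) (singleton x0)) (Finite (q * d x x0)).


Proof.
  destruct hmetric as [hpos [hzero [hsym htri]]].
  assert (hm : is_metric d) by (repeat split; auto; apply hzero).
  exists l. split; [lra|]. split; [lra|].
  intros x0 hx0.
  assert (Hx0 : x0 = xs).
  { apply hzero. specialize (hcontr x0 xs).
    rewrite !TG_sfix in hcontr by auto. rewrite Haus_ss in hcontr by auto.
    rewrite !Dist_single in hcontr. simpl in hcontr. rewrite (hsym xs x0) in hcontr.
    specialize (hpos x0 xs). nra. }
  subst x0. intros x.
  specialize (hcontr x xs). rewrite (TG_sfix G T xs) in hcontr by auto.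
  rewrite Dist_single in hcontr.
  pose proof (Haus_ge d (TG G T x) xs) as Hge.
  specialize (hl x).
  destruct (Haus d (TG G T x) (singleton xs)) as [r| |]; simpl in hcontr, Hge; try tauto.
  assert (r <= d x xs).
  { specialize (hpos x xs). nra. }
  eapply Rbar_le_trans. apply hl. simpl. nra.
Qed.
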